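(* Let $X=\{\mathbf{x}_1,\dots,\mathbf{x}_m\}\subset\mathbb{R}^n$ be a finite set of labeled points, with labels $y_i\in\{-1,1\}$, that is linearly separable. Let $(\mathbf{w},b)$ be the solution of the hard-margin SVM problem for $X$, let $\mathcal{P}=\{\mathbf{x}\in\mathbb{R}^n : \mathbf{w}^T\mathbf{x}+b=0\}$ be the separating hyperplane, and let $\rho\colon\mathbb{R}^n\to\mathcal{P}$ be the orthogonal projection onto $\mathcal{P}$. Let $S_+$ (resp. $S_-$) be the set of support vectors with label $+1$ (resp. $-1$). Then $\rho(\mathrm{conv}(S_+))\cap\rho(\mathrm{conv}(S_-))\neq\emptyset$.
   Context: Labeled points $X$ with labels $y_i\in\{-1,1\}$ (both labels occurring) are linearly separable if there is a hyperplane in $\mathbb{R}^n$ with all points labeled $+1$ strictly on one side and all points labeled $-1$ strictly on the other. The hard-margin SVM problem is: minimize $\frac12\|\mathbf{w}\|^2$ over $\mathbf{w}\in\mathbb{R}^n$, $b\in\mathbb{R}$, subject to $y_i(\mathbf{w}^T\mathbf{x}_i+b)\ge 1$ for all $i$. At the optimum, $\min_i|\mathbf{w}^T\mathbf{x}_i+b|=1$, and the support vectors are the points $\mathbf{x}_i$ with $|\mathbf{w}^T\mathbf{x}_i+b|=1$, i.e. $y_i(\mathbf{w}^T\mathbf{x}_i+b)=1$. $\mathrm{conv}(T)$ denotes the convex hull of $T$. *)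

(* Defs.v *)
(* points of R^n are row vectors 'rV[R]_n over R : realType. *)
From mathcomp Require Import all_boot all_order all_algebra.
From mathcomp Require Import reals.
Set Implicit Arguments. Unset Strict Implicit. Unset Printing Implicit Defensive.
Import Order.TTheory GRing.Theory Num.Theory.
Local Open Scope ring_scope.

Section SVM.
Variables (R : realType) (n m : nat).

Definition dot (u v : 'rV[R]_n) : R := \sum_(k < n) u 0 k * v 0 k.

Definition labels_ok (y : 'I_m -> R) : Prop :=
  (forall i, y i = 1 \/ y i = -1) /\ (exists i, y i = 1) /\ (exists j, y j = -1).

Definition lin_separable (x : 'I_m -> 'rV[R]_n) (y : 'I_m -> R) : Prop :=
  exists (w : 'rV[R]_n) (b : R), forall i, 0 < y i * (dot w (x i) + b).

Definition svm_feasible (x : 'I_m -> 'rV[R]_n) (y : 'I_m -> R)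
  (w : 'rV[R]_n) (b : R) : Prop :=
  forall i, 1 <= y i * (dot w (x i) + b).

Definition svm_solution (x : 'I_m -> 'rV[R]_n) (y : 'I_m -> R)
  (w : 'rV[R]_n) (b : R) : Prop :=
  svm_feasible x y w b /\
  forall w' b', svm_feasible x y w' b' -> dot w w / 2 <= dot w' w' / 2.

Definition support_idx (x : 'I_m -> 'rV[R]_n) (y : 'I_m -> R)
  (w : 'rV[R]_n) (b : R) (s : R) (i : 'I_m) : Prop :=
  y i = s /\ y i * (dot w (x i) + b) = 1.

Definition conv_of (P : 'I_m -> Prop) (x : 'I_m -> 'rV[R]_n) (p : 'rV[R]_n) : Prop :=
  exists lam : 'I_m -> R,
    (forall i, 0 <= lam i) /\ (forall i, ~ P i -> lam i = 0) /\
    \sum_(i < m) lam i = 1 /\ p = \sum_(i < m) lam i *: x i.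

Definition proj_hyp (w : 'rV[R]_n) (b : R) (p : 'rV[R]_n) : 'rV[R]_n :=
  p - ((dot w p + b) / dot w w) *: w.

End SVM.

(* Main.v *)
Require Import Defs.
From mathcomp Require Import all_boot all_order all_algebra.
From mathcomp Require Import reals.
From mathcomp Require Import ring lra.
Import Order.TTheory GRing.Theory Num.Theory.
Local Open Scope ring_scope.

Section Farkas.
Variables (R : realFieldType) (V : lmodType R) (d : V -> V -> R).
Hypothesis hlB : forall u v z t, d (u - t *: v) z = d u z - t * d v z.
Hypothesis hrB : forall u v z t, d z (u - t *: v) = d z u - t * d z v.
Hypothesis hN : forall u z, d (- u) z = - d u z.
Hypothesis hp : forall c, c != 0 -> 0 < d c c.

Lemma farkas k : forall (a : nat -> V) (c : V),
  (exists mu : nat -> R, (forall i, 0 <= mu i) /\ c = \sum_(i < k) mu i *: a i) \/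
  (exists z, (forall i, (i < k)%N -> 0 <= d z (a i)) /\ d z c < 0).
Proof.
elim: k => [|k IH] a c.
  have [->|c0] := eqVneq c 0.
    by left; exists (fun=> 0); split=> //; rewrite big_ord0.
  right; exists (- c); split=> // ; rewrite hN oppr_lt0; exact: hp.
have [[mu [mu0 ->]]|[y [hy hyc]]] := IH a c.
  left; exists (fun i => if (i < k)%N then mu i else 0); split.
    by move=> i; case: ifP.
  rewrite big_ord_recr /= ltnn scale0r addr0.
  by apply: eq_bigr => i _; rewrite /= ltn_ord.
set be := d y (a k).
have [be0|be0] := leP 0 be.
  right; exists y; split=> // i; rewrite ltnS leq_eqVlt => /orP[/eqP->//|]; exact: hy.
set a' := fun i => a i - (d y (a i) / be) *: a k.
set c' := c - (d y c / be) *: a k.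
have ben : be != 0 by rewrite lt_eqF.
have [[mu [mu0 hc']]|[z [hz hzc]]] := IH a' c'.
  set S := \sum_(i < k) mu i * d y (a i).
  set ga := (d y c - S) / be.
  left; exists (fun i => if (i < k)%N then mu i else ga); split.
    move=> i; case: ifP => // _; rewrite /ga.
    have S0 : 0 <= S by apply: sumr_ge0 => j _; apply: mulr_ge0 => //; exact: hy.
    apply: ltW; rewrite -mulrNN -invrN; apply: divr_gt0; rewrite oppr_gt0 //.
    by rewrite subr_lt0; apply: (lt_le_trans hyc).
  rewrite big_ord_recr /= ltnn.
  have -> : c = c' + (d y c / be) *: a k by rewrite /c' subrK.
  rewrite hc' /a' /=.
  under eq_bigr do rewrite scalerBr scalerA.
  rewrite sumrB -scaler_suml.
  under [X in _ = X + _]eq_bigr do rewrite /= ltn_ord.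
  have -> : ga = d y c / be - \sum_(i < k) mu i * (d y (a i) / be).
    by rewrite /ga mulrBl /S mulr_suml; congr (_ - _); apply: eq_bigr => i _; rewrite mulrA.
  by rewrite scalerBl addrAC -addrA [X in _ + X]addrC.
right; exists (z - (d z (a k) / be) *: y); split.
  move=> i; rewrite ltnS leq_eqVlt => /orP[/eqP->|ik].
    by rewrite hlB divfK // subrr.
  have := hz i ik; rewrite /a' hrB hlB.
  by congr (_ <= _); rewrite /be; field.
move: hzc; rewrite /c' hrB hlB.
by congr (_ < _); rewrite /be; field.
Qed.
End Farkas.


Section Dot.
Variables (R : realType) (n : nat).
Implicit Types u v z : 'rV[R]_n.

Lemma dotC u v : dot u v = dot v u.
Proof. by rewrite /dot; apply: eq_bigr => k _; rewrite mulrC. Qed.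
Lemma dotDr z u v : dot z (u + v) = dot z u + dot z v.
Proof. by rewrite /dot -big_split; apply: eq_bigr => k _; rewrite mxE mulrDr. Qed.
Lemma dotZr z t u : dot z (t *: u) = t * dot z u.
Proof. by rewrite /dot mulr_sumr; apply: eq_bigr => k _; rewrite mxE mulrCA. Qed.
Lemma dotNr z u : dot z (- u) = - dot z u.
Proof. by rewrite -scaleN1r dotZr mulN1r. Qed.
Lemma dotBr z u v : dot z (u - v) = dot z u - dot z v.
Proof. by rewrite dotDr dotNr. Qed.
Lemma dot0r z : dot z 0 = 0.
Proof. by rewrite /dot big1 // => k _; rewrite mxE mulr0. Qed.
Lemma dotDl z u v : dot (u + v) z = dot u z + dot v z.
Proof. by rewrite dotC dotDr !(dotC z). Qed.
Lemma dotZl z t u : dot (t *: u) z = t * dot u z.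
Proof. by rewrite dotC dotZr dotC. Qed.
Lemma dotNl z u : dot (- u) z = - dot u z.
Proof. by rewrite dotC dotNr dotC. Qed.
Lemma dotBl z u v : dot (u - v) z = dot u z - dot v z.
Proof. by rewrite dotDl dotNl. Qed.
Lemma dot0l z : dot 0 z = 0.
Proof. by rewrite dotC dot0r. Qed.
Lemma dot_sumr (I : finType) z (F : I -> 'rV[R]_n) :
  dot z (\sum_i F i) = \sum_i dot z (F i).
Proof. exact: (big_morph (dot z) (dotDr z) (dot0r z)). Qed.
Lemma dot_ge0 u : 0 <= dot u u.
Proof. by apply: sumr_ge0 => k _; rewrite -expr2 sqr_ge0. Qed.
Lemma dot_eq0 u : dot u u = 0 -> u = 0.
Proof.
move=> /eqP; rewrite /dot psumr_eq0 => [/allP h|k _]; last by rewrite -expr2 sqr_ge0.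
apply/matrixP => i k; rewrite ord1 mxE.
have := h k (mem_index_enum k); rewrite -expr2 sqrf_eq0 => /eqP //.
Qed.
Lemma dot_gt0 u : u != 0 -> 0 < dot u u.
Proof.
move=> u0; rewrite lt_def dot_ge0 andbT; apply/eqP => /dot_eq0 h.
by rewrite h eqxx in u0.
Qed.
End Dot.

Section Pair.
Variables (R : realType) (n : nat).
Definition V := ('rV[R]_n * R^o)%type.
Definition dd (p q : V) : R := dot p.1 q.1 + p.2 * q.2.

Lemma dd_lB u v z t : dd (u - t *: v) z = dd u z - t * dd v z.
Proof. rewrite /dd /= dotBl dotZl -[t *: v.2]/(t * v.2). ring. Qed.
Lemma dd_rB u v z t : dd z (u - t *: v) = dd z u - t * dd z v.
Proof. rewrite /dd /= dotBr dotZr -[t *: v.2]/(t * v.2). ring. Qed.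
Lemma dd_N u z : dd (- u) z = - dd u z.
Proof. rewrite /dd /= dotNl. ring. Qed.
Lemma dd_p c : c != 0 -> 0 < dd c c.
Proof.
case: c => u s /= h; rewrite /dd /=.
have [u0|u0] := eqVneq u 0.
  subst u.
  have s0 : s != 0 by apply: contraNneq h => ->; apply/eqP.
  by rewrite dot0l add0r lt_def -expr2 sqrf_eq0 s0 sqr_ge0.
by apply: ltr_wpDr; [rewrite -expr2 sqr_ge0 | exact: dot_gt0].
Qed.
End Pair.

Theorem lemma4p1 (R : realType) (n m : nat)
  (x : 'I_m -> 'rV[R]_n) (y : 'I_m -> R)
  (hy : labels_ok y) (hsep : lin_separable x y)
  (w : 'rV[R]_n) (b : R) (hsol : svm_solution x y w b) :
  exists p q : 'rV[R]_n,
    conv_of (support_idx x y w b 1) x p /\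
    conv_of (support_idx x y w b (-1)) x q /\
    proj_hyp w b p = proj_hyp w b q.
Proof.
have [hy1 [[i1 hi1] [j1 hj1]]] := hy.
case: hsol => hfeas hopt.
pose supp := fun i => y i * (dot w (x i) + b) == 1.
have ww0 : dot w w != 0.
  apply/eqP => /dot_eq0 w0.
  have := hfeas i1; have := hfeas j1; rewrite hi1 hj1 w0 !dot0l !add0r mul1r mulN1r.
  lra.
have wwp : 0 < dot w w by rewrite lt_def ww0 dot_ge0.
pose ai := fun i : 'I_m => if supp i then ((y i *: x i, y i : R^o) : V R n) else 0.
pose a := fun j : nat => oapp ai 0 (insub j).
have aE : forall i : 'I_m, a i = ai i by move=> i; rewrite /a valK.
have := @farkas R (V R n) (@dd R n) (@dd_lB R n) (@dd_rB R n) (@dd_N R n) (@dd_p R n) m a ((w, 0 : R^o) : V R n).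
case=> [[mu [mu0 hmu]]|[[v c] [hz hzc]]]; last first.
exfalso.
have dvw : dot v w < 0 by move: hzc; rewrite /dd /= mulr0 addr0.
pose g := fun i => y i * (dot v (x i) + c).
have hg : forall i, supp i -> 0 <= g i.
  move=> i si; have := hz i (ltn_ord i); rewrite aE /ai si /dd /= dotZr.
  by rewrite /g -[c * y i]/(c * y i) mulrDr [c * _]mulrC.
pose sl := fun i => y i * (dot w (x i) + b) - 1.
have sl0 : forall i, 0 <= sl i by move=> i; rewrite /sl subr_ge0.
pose tau := fun i => if supp i then 1 else sl i / (`|g i| + 1).
have taup : forall i, 0 < tau i.
  move=> i; rewrite /tau; case: ifP => // si.
  apply: divr_gt0; last by rewrite ltr_wpDl.
  by rewrite lt_def sl0 andbT /sl subr_eq0; exact: negbT si.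
pose t0 := - dot v w / (dot v v + 1).
have vvp : 0 <= dot v v by exact: dot_ge0.
have t0p : 0 < t0 by apply: divr_gt0; [rewrite oppr_gt0 | rewrite ltr_wpDl].
pose t := \big[Order.min/t0]_(i < m) tau i.
have tp : 0 < t.
  apply: (big_ind (fun u => 0 < u) t0p) => [u1 u2 h1 h2|i _]; [by rewrite lt_min h1 h2 | exact: taup].
have tt0 : t <= t0 by exact: bigmin_le_id.
have ttau : forall i, t <= tau i by move=> i; exact: bigmin_le.
have feas : svm_feasible x y (w + t *: v) (b + t * c).
  move=> i.
  have -> : y i * (dot (w + t *: v) (x i) + (b + t * c)) = (sl i + 1) + t * g i.
    by rewrite /sl /g dotDl dotZl; ring.
  rewrite /tau in ttau; have := ttau i; have := taup i; rewrite /tau.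
  case: ifP => si.
    have := hg i si; move: si; rewrite /supp => /eqP si.
    have : sl i = 0 by rewrite /sl si subrr.
    move=> -> gp _ _; rewrite add0r lerDl; exact: mulr_ge0 (ltW tp) gp.
  move=> tip tig.
  have e3 : sl i / (`|g i| + 1) * (`|g i| + 1) = sl i by rewrite divfK // gt_eqF // ltr_wpDl.
  rewrite mulrDr mulr1 in e3.
  have e1 : - (t * `|g i|) <= t * g i.
    by rewrite -mulrN; apply: ler_wpM2l; [exact: ltW|rewrite lerNl -normrN ler_norm].
  have e2 : t * `|g i| <= sl i / (`|g i| + 1) * `|g i|.
    by apply: ler_wpM2r.
  lra.
have := hopt _ _ feas.
rewrite dotDl !dotDr !dotZl !dotZr (@dotC _ _ w v).
have e3 : t0 * (dot v v + 1) = - dot v w by rewrite divfK // gt_eqF // ltr_wpDl.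
rewrite mulrDr mulr1 in e3.
have e4 : t * dot v v <= t0 * dot v v by apply: ler_wpM2r.
have e5 : t * (t * dot v v) <= t * (t0 * dot v v) by apply: ler_wpM2l => //; exact: ltW.
have e6 : 0 < t * t0 by apply: mulr_gt0.
have e7 : t * (t0 * dot v v) = - (t * dot v w) - t * t0.
  have -> : t0 * dot v v = - dot v w - t0 by rewrite -e3; ring.
  ring.
have e8 : t * dot v w < 0 by rewrite pmulr_rlt0.
lra.
pose be := fun i => if supp i then mu i else 0.
have be0 : forall i, 0 <= be i by move=> i; rewrite /be; case: ifP.
have hw : w = \sum_(i < m) (be i * y i) *: x i.
  have := congr1 fst hmu; rewrite /= => ->.
  rewrite (big_morph fst (id1:=0) (op1:=+%R)) //.
  apply: eq_bigr => i _; rewrite aE /ai /be /=.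
  by case: ifP => _ /=; rewrite ?scalerA // mul0r scale0r scaler0.
have hy0 : \sum_(i < m) be i * y i = 0.
  have h2 := congr1 snd hmu; rewrite /= in h2; rewrite [RHS]h2.
  rewrite (big_morph snd (id1:=0) (op1:=+%R)) //.
  apply: eq_bigr => i _; rewrite aE /ai /be /=.
  by case: ifP => _ /=; rewrite /= ?mul0r ?scaler0.
have hsupp : forall i, be i != 0 -> y i * (dot w (x i) + b) = 1.
  by move=> i; rewrite /be; case: ifP => [/eqP //|_]; rewrite eqxx.
pose pos := fun i => y i == 1.
have yneg : forall i, ~~ pos i -> y i = -1.
  by move=> i; rewrite /pos; case: (hy1 i) => ->; rewrite ?eqxx.
pose Ap := \sum_(i < m) (if pos i then be i else 0).
pose Am := \sum_(i < m) (if pos i then 0 else be i).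
have hww : dot w w = Ap + Am.
  rewrite /Ap /Am -big_split /=.
  have -> : dot w w = \sum_(i < m) be i * (y i * (dot w (x i) + b)).
    rewrite {2}hw dot_sumr.
    have -> : \sum_(i < m) be i * (y i * (dot w (x i) + b)) =
       \sum_(i < m) (be i * y i) * dot w (x i) + b * \sum_(i < m) be i * y i.
      rewrite mulr_sumr -big_split /=; apply: eq_bigr => i _; ring.
    by rewrite hy0 mulr0 addr0; apply: eq_bigr => i _; rewrite dotZr.
  apply: eq_bigr => i _.
  have [->|/hsupp ->] := eqVneq (be i) 0; first by rewrite mul0r; case: ifP; rewrite ?addr0.
  by rewrite mulr1; case: ifP; rewrite ?addr0 ?add0r.
have hdiff : Ap - Am = 0.
  rewrite -hy0 /Ap /Am -sumrB; apply: eq_bigr => i _.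
  case: ifP => hp; first by move/eqP: hp => ->; rewrite subr0 mulr1.
  by rewrite yneg ?hp // sub0r mulrN1.
have hAp : Ap * (2 / dot w w) = 1.
  have -> : Ap = dot w w / 2 by rewrite hww; lra.
  by field.
have hAm : Am * (2 / dot w w) = 1.
  have -> : Am = dot w w / 2 by rewrite hww; lra.
  by field.
pose k := 2 / dot w w.
pose lp := fun i => (if pos i then be i else 0) * k.
pose lm := fun i => (if pos i then 0 else be i) * k.
have kp : 0 <= k by apply: divr_ge0 => //; exact: ltW.
exists (\sum_(i < m) lp i *: x i), (\sum_(i < m) lm i *: x i).
have hsum : forall (l : 'I_m -> R) (s : R), \sum_(i < m) l i = 1 ->
    (forall i, l i * (dot w (x i) + b) = s * l i) ->
    dot w (\sum_(i < m) l i *: x i) + b = s.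
  move=> l s h1 h2.
  rewrite dot_sumr -[b]mul1r -h1 mulr_suml -big_split /=.
  rewrite -[s]mulr1 -h1 mulr_sumr; apply: eq_bigr => i _.
  by rewrite dotZr -mulrDr h2.
have slp : \sum_(i < m) lp i = 1 by rewrite -hAp /Ap mulr_suml.
have slm : \sum_(i < m) lm i = 1 by rewrite -hAm /Am mulr_suml.
have hp1 : dot w (\sum_(i < m) lp i *: x i) + b = 1.
  apply: (hsum lp 1 slp) => i; rewrite mul1r /lp.
  case: ifP => hp; last by rewrite !mul0r.
  have [->|/hsupp] := eqVneq (be i) 0; first by rewrite !mul0r.
  by move/eqP: hp => ->; rewrite mul1r => ->; rewrite mulr1.
split.
  exists lp; split; first by move=> i; apply: mulr_ge0 => //; case: ifP.
  split; last by split.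
  move=> i hn; rewrite /lp; case: ifP => hp; last by rewrite mul0r.
  have [be00|/hsupp hs] := eqVneq (be i) 0; first by rewrite be00 mul0r.
  by exfalso; apply: hn; split => //; apply/eqP.
split.
  exists lm; split; first by move=> i; apply: mulr_ge0 => //; case: ifP.
  split; last by split.
  move=> i hn; rewrite /lm; case: ifP => hp; first by rewrite mul0r.
  have [be00|/hsupp hs] := eqVneq (be i) 0; first by rewrite be00 mul0r.
  by exfalso; apply: hn; split => //; apply: yneg; rewrite hp.
have hm1 : dot w (\sum_(i < m) lm i *: x i) + b = -1.
  apply: (hsum lm (-1) slm) => i; rewrite /lm.
  case: ifP => hp; first by rewrite !mul0r mulr0.
  have [->|/hsupp] := eqVneq (be i) 0; first by rewrite !mul0r mulr0.
  rewrite yneg ?hp // mulN1r => /eqP; rewrite eqr_oppLR => /eqP ->.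
  by rewrite mulN1r mulrN1.
have hpq : \sum_(i < m) lp i *: x i = \sum_(i < m) lm i *: x i + k *: w.
  apply/eqP; rewrite addrC -subr_eq -sumrB hw scaler_sumr; apply/eqP.
  apply: eq_bigr => i _; rewrite -scalerBl scalerA; congr (_ *: _).
  rewrite /lp /lm; case: ifP => hp.
    by move/eqP: hp => ->; ring.
  by rewrite yneg ?hp //; ring.
rewrite /proj_hyp hp1 hm1 hpq -addrA -scalerBl -scaleNr; congr (_ + _ *: _).
rewrite /k; field.
by rewrite ww0.
Qed.
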